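(* Consider the following four sequences of groups $G_d$ acting on spaces $V_d$, each with the zero-padding maps $\gamma_d\colon V_d\to V_{d+1}$: (i) $V_d=\mathbb{R}^d$, $G_d=\mathfrak{S}_d$ permuting coordinates, $\gamma_d(x)=(x,0)$; (ii) $V_d=\mathbb{R}^{d\times k}$, $G_d=\mathfrak{S}_d$ permuting rows, $\gamma_d$ appending a zero row; (iii) $V_d$ the real symmetric $d\times d$ matrices, $G_d=\mathfrak{S}_d$ acting by $X\mapsto PXP^\top$, $\gamma_d$ appending a zero row and a zero column; (iv) $V_d=\mathbb{R}^{d\times k}$, $G_d$ generated by row permutations and right multiplication by $O(k)$ (acting by $X\mapsto PXQ$), $\gamma_d$ appending a zero row. In each case $\{(V_d,\gamma_d)\}_{d\in\mathbb{N}}$ is a consistent sequence, and for each fixed $m$, for all $d\ge D$ the restriction map $\mathbb{R}[V_{d+1}]_m^{G_{d+1}}\to\mathbb{R}[V_d]_m^{G_d}$, $f\mapsto f\circ\gamma_d$, is a linear isomorphism, where $D=m,\ m,\ 2m,\ 2m$ in cases (i), (ii), (iii), (iv) respectively. That is, the stability degree of $\{(\mathbb{R}[V_d]_m,\gamma_d)\}_{d\in\mathbb{N}}$ is at most $D$.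
   Context: A consistent sequence is a sequence of Euclidean spaces $V_d$ with a nested sequence of compact groups $G_1\subseteq G_2\subseteq\cdots$, $G_d$ acting linearly and orthogonally on $V_d$, together with linear isometries $\gamma_d\colon V_d\to V_{d+1}$ that are $G_d$-equivariant: $\gamma_d(gx)=g\gamma_d(x)$ for $x\in V_d$, $g\in G_d$ (where $G_d\subseteq G_{d+1}$ acts on $V_{d+1}$ fixing the added coordinates). $\mathbb{R}[V]_m$ is the space of real polynomials on $V$ of degree at most $m$ and $\mathbb{R}[V]_m^G$ the $G$-invariant ones. The stability degree of $\{(\mathbb{R}[V_d]_m,\gamma_d)\}$ is the smallest $D$ such that $f\mapsto f\circ\gamma_d$ restricts to an isomorphism $\mathbb{R}[V_{d+1}]_m^{G_{d+1}}\to\mathbb{R}[V_d]_m^{G_d}$ for all $d\ge D$. *)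

(* Defs.v *)
From HB Require Import structures.
From mathcomp Require Import all_boot all_order all_algebra all_fingroup.
From mathcomp Require Import reals.
From mathcomp Require Import mpoly.

Set Implicit Arguments.
Unset Strict Implicit.
Unset Printing Implicit Defensive.

Import GRing.Theory Num.Theory.
Local Open Scope ring_scope.

(* Every space V_d is realised as a linear subspace (given by a predicate)
   of a matrix space 'M[R]_(r, c), with the Frobenius inner product. *)
Definition frob (R : realType) (r c : nat) (X Y : 'M[R]_(r, c)) : R :=
  \sum_(i < r) \sum_(j < c) X i j * Y i j.

(* Polynomial functions of degree at most m on V: restrictions to V of
   polynomials of total degree <= m in the entries (coordinates) of the
   ambient matrix space; coordinates are indexed through mxvec. *)
Definition polyfun (R : realType) (r c : nat) (V : 'M[R]_(r, c) -> Prop)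
    (m : nat) (f : 'M[R]_(r, c) -> R) : Prop :=
  exists p : {mpoly R[r * c]},
    (msize p <= m.+1)%N /\ forall X, V X -> f X = p.@[fun i => mxvec X 0 i].

Definition invpoly (R : realType) (r c : nat) (V : 'M[R]_(r, c) -> Prop)
    (Gt : Type) (G : Gt -> Prop) (act : Gt -> 'M[R]_(r, c) -> 'M[R]_(r, c))
    (m : nat) (f : 'M[R]_(r, c) -> R) : Prop :=
  polyfun V m f /\ forall g X, G g -> V X -> f (act g X) = f X.

(* The restriction map f |-> f o gam is a well defined bijection (hence, being
   linear, a linear isomorphism) from R[V2]_m^{G2} onto R[V1]_m^{G1}.
   Functions are identified when they agree on the relevant space. *)
Definition restr_iso (R : realType) (r1 c1 r2 c2 : nat)
    (V1 : 'M[R]_(r1, c1) -> Prop) (Gt1 : Type) (G1 : Gt1 -> Prop)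
    (act1 : Gt1 -> 'M[R]_(r1, c1) -> 'M[R]_(r1, c1))
    (V2 : 'M[R]_(r2, c2) -> Prop) (Gt2 : Type) (G2 : Gt2 -> Prop)
    (act2 : Gt2 -> 'M[R]_(r2, c2) -> 'M[R]_(r2, c2))
    (gam : 'M[R]_(r1, c1) -> 'M[R]_(r2, c2)) (m : nat) : Prop :=
  [/\ (forall f, invpoly V2 G2 act2 m f -> invpoly V1 G1 act1 m (fun X => f (gam X))),
      (forall f1 f2, invpoly V2 G2 act2 m f1 -> invpoly V2 G2 act2 m f2 ->
         (forall X, V1 X -> f1 (gam X) = f2 (gam X)) -> forall Y, V2 Y -> f1 Y = f2 Y)
    & (forall h, invpoly V1 G1 act1 m h ->
         exists f, invpoly V2 G2 act2 m f /\ forall X, V1 X -> f (gam X) = h X)].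

Definition consistent_seq (R : realType) (r c : nat -> nat)
    (V : forall d, 'M[R]_(r d, c d) -> Prop)
    (Gt : nat -> Type) (G : forall d, Gt d -> Prop)
    (act : forall d, Gt d -> 'M[R]_(r d, c d) -> 'M[R]_(r d, c d))
    (emb : forall d, Gt d -> Gt d.+1)
    (gam : forall d, 'M[R]_(r d, c d) -> 'M[R]_(r d.+1, c d.+1)) : Prop :=
  forall d,
  [/\ (forall X, V d X -> V d.+1 (gam d X)) /\
        (forall (a : R) X Y, gam d (a *: X + Y) = a *: gam d X + gam d Y),
      forall X Y, V d X -> V d Y -> frob (gam d X) (gam d Y) = frob X Y,
      forall g, G d g ->
        [/\ forall X, V d X -> V d (act d g X),
            forall (a : R) X Y, act d g (a *: X + Y) = a *: act d g X + act d g Y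
          & forall X Y, V d X -> V d Y -> frob (act d g X) (act d g Y) = frob X Y],
      forall g, G d g -> G d.+1 (emb d g)
    & (forall g X, G d g -> V d X -> gam d (act d g X) = act d.+1 (emb d g) (gam d X))].

Definition stab_deg_le (R : realType) (r c : nat -> nat)
    (V : forall d, 'M[R]_(r d, c d) -> Prop)
    (Gt : nat -> Type) (G : forall d, Gt d -> Prop)
    (act : forall d, Gt d -> 'M[R]_(r d, c d) -> 'M[R]_(r d, c d))
    (gam : forall d, 'M[R]_(r d, c d) -> 'M[R]_(r d.+1, c d.+1))
    (D : nat -> nat) : Prop :=
  forall m d, (D m <= d)%N ->
    restr_iso (V d) (G d) (act d) (V d.+1) (G d.+1) (act d.+1) (gam d) m.

Definition padmx (R : realType) (d : nat) : 'M[R]_(d.+1, d) :=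
  \matrix_(i < d.+1, j < d) ((i : nat) == j)%:R.

Definition liftS (d : nat) (s : 'S_d) : 'S_d.+1 := lift_perm ord_max ord_max s.

Definition allV (R : realType) (r c : nat -> nat) (d : nat) (X : 'M[R]_(r d, c d)) := True.
Definition allG (Gt : nat -> Type) (d : nat) (g : Gt d) := True.

(* (i) V_d = R^d (column vectors), (ii) V_d = R^{d x k}: rows permuted *)
Definition rowperm_act (R : realType) (k d : nat) (s : 'S_d) (X : 'M[R]_(d, k))
  : 'M[R]_(d, k) := perm_mx s *m X.
Definition rowpad (R : realType) (k d : nat) (X : 'M[R]_(d, k)) : 'M[R]_(d.+1, k) :=
  padmx R d *m X.

Definition symV (R : realType) (d : nat) (X : 'M[R]_(d, d)) : Prop := X^T = X.
Definition conj_act (R : realType) (d : nat) (s : 'S_d) (X : 'M[R]_(d, d))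
  : 'M[R]_(d, d) := perm_mx s *m X *m (perm_mx s)^T.
Definition sympad (R : realType) (d : nat) (X : 'M[R]_(d, d)) : 'M[R]_(d.+1, d.+1) :=
  padmx R d *m X *m (padmx R d)^T.

Definition SO_t (R : realType) (k d : nat) : Type := ('S_d * 'M[R]_k)%type.
Definition SO_G (R : realType) (k d : nat) (g : SO_t R k d) : Prop :=
  (g.2)^T *m g.2 = 1%:M.
Definition SO_act (R : realType) (k d : nat) (g : SO_t R k d) (X : 'M[R]_(d, k))
  : 'M[R]_(d, k) := perm_mx g.1 *m X *m g.2.
Definition SO_emb (R : realType) (k d : nat) (g : SO_t R k d) : SO_t R k d.+1 :=
  (liftS g.1, g.2).

(* Main.v *)
Require Import Defs.
From HB Require Import structures.
From mathcomp Require Import all_boot all_order all_algebra all_fingroup.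
From mathcomp Require Import reals.
From mathcomp Require Import mpoly.
From mathcomp Require Import zify.

Set Implicit Arguments.
Unset Strict Implicit.
Unset Printing Implicit Defensive.
Import GRing.Theory Num.Theory.
Local Open Scope ring_scope.


Section PolyFun.
Variable R : realType.

Lemma polyfun_ext r c (V : 'M[R]_(r, c) -> Prop) m f g :
  (forall X, V X -> f X = g X) -> polyfun V m f -> polyfun V m g.
Proof. by move=> e [p [hp hf]]; exists p; split=> // X VX; rewrite -e // hf. Qed.

Lemma polyfun0 r c (V : 'M[R]_(r, c) -> Prop) m : polyfun V m (fun _ => 0).
Proof. by exists 0; split; [rewrite msize0|move=> X _; rewrite meval0]. Qed.

Lemma polyfun_lin r c (V : 'M[R]_(r, c) -> Prop) m f g (a : R) :
  polyfun V m f -> polyfun V m g -> polyfun V m (fun X => a * f X + g X).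
Proof.
move=> [p [hp hf]] [q [hq hg]]; exists (a *: p + q); split.
  apply: leq_trans (msizeD_le _ _) _; rewrite geq_max hq andbT.
  exact: leq_trans (msizeZ_le _ _) hp.
by move=> X VX; rewrite mevalD mevalZ hf ?hg.
Qed.

Lemma polyfun_sum r c (V : 'M[R]_(r, c) -> Prop) m (I : finType) (P : pred I)
   (F : I -> 'M[R]_(r, c) -> R) :
  (forall i, polyfun V m (F i)) -> polyfun V m (fun X => \sum_(i | P i) F i X).
Proof.
move=> hF; rewrite unlock /=; elim: (index_enum I) => [|i s ih] /=.
  exact: polyfun0.
case: (P i); last by [].
by apply: polyfun_ext (polyfun_lin 1 (hF i) ih) => X _; rewrite mul1r.
Qed.

Lemma msize_mul_le n (p q : {mpoly R[n]}) : (msize (p * q) <= (msize p + msize q).-1)%N.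
Proof.
have [->|nz_p] := eqVneq p 0; first by rewrite mul0r msize0.
have [->|nz_q] := eqVneq q 0; first by rewrite mulr0 msize0.
by rewrite msizeM.
Qed.

Lemma msize_exp_le n (q : {mpoly R[n]}) e : (msize q <= 2)%N -> (msize (q ^+ e) <= e.+1)%N.
Proof.
move=> hq; elim: e => [|e ih]; first by rewrite expr0 msize1.
rewrite exprSr; apply: leq_trans (msize_mul_le _ _) _.
have := leq_add ih hq; move: (msize _) (msize _) => u v; lia.
Qed.

Lemma msize_prod_le n k (lq : k.-tuple {mpoly R[n]}) (a : 'X_{1..k}) :
  (forall i, msize (tnth lq i) <= 2)%N ->
  (msize (\prod_(i < k) tnth lq i ^+ a i) <= (mdeg a).+1)%N.
Proof.
move=> hq; rewrite mdegE.
apply: (big_rec2 (fun s x => msize x <= s.+1)%N) => [|i s x _ ih]; first by rewrite msize1.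
apply: leq_trans (msize_mul_le _ _) _.
have := leq_add (msize_exp_le (a i) (hq i)) ih.
move: (msize _) (msize _) => u v; lia.
Qed.

Lemma polyfun_comp r1 c1 r2 c2 (V1 : 'M[R]_(r1, c1) -> Prop) (V2 : 'M[R]_(r2, c2) -> Prop)
   m f (L : 'M[R]_(r1, c1) -> 'M[R]_(r2, c2)) :
  (forall (a : R) X Y, L (a *: X + Y) = a *: L X + L Y) ->
  (forall X, V1 X -> V2 (L X)) -> polyfun V2 m f -> polyfun V1 m (fun X => f (L X)).
Proof.
move=> hL hV [p [hp hf]].
have L0 : L 0 = 0.
  by have := hL (-1) 0 0; rewrite scaler0 addr0 scaleN1r addNr.
have LZ a X : L (a *: X) = a *: L X by rewrite -[a *: X]addr0 hL L0 addr0.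
have LD X Y : L (X + Y) = L X + L Y by rewrite -[X]scale1r hL !scale1r.
have Lsum (I : Type) (s : seq I) (F : I -> 'M_(r1, c1)) :
    L (\sum_(i <- s) F i) = \sum_(i <- s) L (F i).
  by elim/big_rec2: _ => [|i x y _ <-]; rewrite ?L0 ?LD.
pose q (t : 'I_(r2 * c2)) : {mpoly R[r1 * c1]} :=
  \sum_(i < r1) \sum_(j < c1) (mxvec (L (delta_mx i j)) 0 t) *: 'X_(mxvec_index i j).
pose lq := [tuple q t | t < r2 * c2].
exists (p \mPo lq); split.
  rewrite comp_mpolyE; apply: leq_trans (msize_sum _ _ _) _.
  apply/bigmax_leqP_seq => a ha _; apply: leq_trans (msizeZ_le _ _) _.
  apply: leq_trans (msize_prod_le _ _) _.
    move=> t; rewrite tnth_mktuple /q; apply: leq_trans (msize_sum _ _ _) _.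
    apply/bigmax_leqP => i _; apply: leq_trans (msize_sum _ _ _) _.
    apply/bigmax_leqP => j _; apply: leq_trans (msizeZ_le _ _) _.
    by rewrite msizeX mdeg1.
  exact: leq_trans (msize_mdeg_lt ha) hp.
move=> X VX; rewrite comp_mpoly_meval (hf _ (hV _ VX)).
apply: (@meval_eq _ R) => t.
rewrite tnth_mktuple /q.
rewrite {1}(matrix_sum_delta X) Lsum linear_sum summxE.
rewrite raddf_sum /=; apply: eq_bigr => i _.
rewrite Lsum linear_sum summxE raddf_sum /=; apply: eq_bigr => j _.
by rewrite LZ linearZ /= mxE mevalZ mevalXU mxvecE mulrC.
Qed.

End PolyFun.


Section Deg.
Variable R : realType.

Lemma sum_inv (T : finType) (phi : T -> T) (P : pred T) (F : T -> R) :
  involutive phi -> (forall x, P (phi x) = ~~ P x) ->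
  \sum_x F x = \sum_(x | ~~ P x) (F x + F (phi x)).
Proof.
move=> hi hP; rewrite (bigID P) /= addrC big_split /=; congr (_ + _).
rewrite (reindex_inj (inv_inj hi)) /=; apply: eq_bigl => x; by rewrite hP.
Qed.

Definition tog (N : nat) (k : 'I_N) (W : {set 'I_N}) :=
  if k \in W then W :\ k else k |: W.

Lemma tog_inv N (k : 'I_N) : involutive (tog k).
Proof.
move=> W; rewrite /tog; case: (boolP (k \in W)) => hk.
  by rewrite in_setD1 eqxx /= setD1K.
by rewrite setU11 setU1K.
Qed.

Lemma tog_in N (k : 'I_N) W : (k \in tog k W) = ~~ (k \in W).
Proof. by rewrite /tog; case: (k \in W); rewrite ?in_setD1 ?setU11 ?eqxx. Qed.

Lemma card_bigcup_le (I T : finType) (A : {set I}) (F : I -> {set T}) b :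
  (forall i, #|F i| <= b)%N -> (#|\bigcup_(i in A) F i| <= #|A| * b)%N.
Proof.
move=> hF; rewrite -sum_nat_const.
elim/big_rec2: _ => [|i U s _ ih]; first by rewrite cards0.
rewrite cardsU; apply: leq_trans (leq_subr _ _) _; exact: leq_add.
Qed.

Lemma subsetU1_notin (T : finType) (A B : {set T}) k :
  k \notin A -> (A \subset k |: B) = (A \subset B).
Proof.
move=> hk; apply/idP/idP => h; last exact: subset_trans h (subsetUr _ _).
apply/subsetP => x hx; have := subsetP h x hx; rewrite in_setU1.
by case/orP => // /eqP ex; rewrite -ex hx in hk.
Qed.

Lemma alt_mask_sum n N b (gs : 'I_n -> {set 'I_N}) (p : {mpoly R[n]}) m
   (v : 'I_n -> R) :
  (forall t, #|gs t| <= b)%N -> (msize p <= m.+1)%N -> (b * m < N)%N ->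
  \sum_(W : {set 'I_N}) (-1) ^+ #|W| *
     p.@[fun t => if gs t \subset W then v t else 0] = 0.
Proof.
move=> hgs hp hN.
under eq_bigr => W _ do rewrite mevalE mulr_sumr.
rewrite exchange_big /= big1_seq // => a /andP[_ ha].
pose A := [set t | a t != 0%N].
pose S := \bigcup_(t in A) gs t.
have hA : (#|A| <= m)%N.
  have : (mdeg a < m.+1)%N := leq_trans (msize_mdeg_lt ha) hp.
  rewrite ltnS mdegE; apply: leq_trans.
  rewrite -sum1_card big_mkcond /=; apply: leq_sum => t _.
  by rewrite inE; case: (a t).
have hS : (#|S| < N)%N.
  apply: leq_ltn_trans (card_bigcup_le _ hgs) _.
  apply: leq_ltn_trans _ hN; rewrite mulnC; exact: leq_mul.
have [k hk] : exists k, k \notin S.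
  case: (pickP [pred k | k \notin S]) => [k hk|h]; first by exists k.
  have : [set: 'I_N] \subset S.
    by apply/subsetP => x _; have := h x; rewrite /=; case: (x \in S).
  by move/subset_leq_card; rewrite cardsT card_ord leqNgt hS.
have hkt t : a t != 0%N -> k \notin gs t.
  move=> at0; apply: contra hk => hkg; apply/bigcupP; exists t => //.
  by rewrite inE.
rewrite (sum_inv _ (tog_inv k) (P := fun W : {set 'I_N} => k \in W)) ?tog_in //.
apply: big1 => W hW; rewrite /tog (negbTE hW) cardsU1 hW /= exprS.
rewrite mulN1r mulNr.
have -> : \prod_(i < n) (if gs i \subset k |: W then v i else 0) ^+ a i =
          \prod_(i < n) (if gs i \subset W then v i else 0) ^+ a i.
  apply: eq_bigr => t _.
  case: (eqVneq (a t) 0%N) => [->|at0]; first by rewrite !expr0.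
  by rewrite subsetU1_notin ?hkt.
by rewrite addrN.
by move=> x; rewrite tog_in.
Qed.

End Deg.


Section Mx.
Variable R : realType.

Definition topmx d : 'M[R]_(d, d.+1) := (padmx R d)^T.
Definition diagW n (W : {set 'I_n}) : 'M[R]_n := \matrix_(i, j) ((i == j) && (i \in W))%:R.

Lemma eq_liftmax d (i : 'I_d) (k : 'I_d.+1) : (lift ord_max i == k) = ((i : nat) == k).
Proof. by rewrite -val_eqE /= /bump leqNgt ltn_ord add0n. Qed.

Lemma liftmaxE d (i : 'I_d) : nat_of_ord (@lift d.+1 ord_max i) = i.
Proof. by rewrite /= /bump leqNgt ltn_ord add0n. Qed.

Lemma permE_mx n (s : 'S_n) i j : (perm_mx s : 'M[R]_n) i j = (s i == j)%:R.
Proof. by rewrite /perm_mx /row_perm !mxE. Qed.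

Lemma mul_perm_l n p (s : 'S_n) (A : 'M[R]_(n, p)) i j : (perm_mx s *m A) i j = A (s i) j.
Proof. by rewrite -row_permE mxE. Qed.

Lemma mul_diag_l n p (W : {set 'I_n}) (A : 'M[R]_(n, p)) i j :
  (diagW W *m A) i j = (i \in W)%:R * A i j.
Proof.
rewrite mxE (bigD1 i) //= big1 ?addr0; first by rewrite mxE eqxx.
by move=> k /negbTE hk; rewrite mxE eq_sym hk mul0r.
Qed.

Lemma padE d (i : 'I_d.+1) (j : 'I_d) : padmx R d i j = ((i : nat) == j)%:R.
Proof. by rewrite mxE. Qed.

Lemma mul_top_l d p (A : 'M[R]_(d.+1, p)) i j : (topmx d *m A) i j = A (lift ord_max i) j.
Proof.
rewrite /topmx mxE (bigD1 (lift ord_max i)) //= big1 ?addr0; first by rewrite mxE padE lift_max eqxx mul1r.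
move=> k hk; rewrite mxE padE; case: eqP => [e|_]; last by rewrite mul0r.
by case/eqP: hk; apply: val_inj; rewrite /= e /bump leqNgt ltn_ord.
Qed.

Lemma mul_pad_lift d p (B : 'M[R]_(d, p)) i j : (padmx R d *m B) (lift ord_max i) j = B i j.
Proof.
rewrite mxE (bigD1 i) //= big1 ?addr0; first by rewrite padE lift_max eqxx mul1r.
move=> k hk; rewrite padE lift_max; case: eqP => [e|_]; last by rewrite mul0r.
by case/eqP: hk; apply: val_inj.
Qed.

Lemma mul_pad_max d p (B : 'M[R]_(d, p)) j : (padmx R d *m B) ord_max j = 0.
Proof.
rewrite mxE big1 // => k _; rewrite padE /=.
by rewrite (gtn_eqF (ltn_ord k)) mul0r.
Qed.

Lemma I1 d (s : 'S_d) : padmx R d *m perm_mx s = perm_mx (liftS s) *m padmx R d.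
Proof.
apply/matrixP => r k; rewrite mul_perm_l padE.
case: (unliftP ord_max r) => [i ->|->].
  by rewrite mul_pad_lift permE_mx /liftS lift_perm_lift lift_max.
by rewrite mul_pad_max /liftS lift_perm_id /= (gtn_eqF (ltn_ord k)).
Qed.

Lemma I2 d (s : 'S_d) : topmx d *m perm_mx (liftS s) = perm_mx s *m topmx d.
Proof.
apply/matrixP => i k; rewrite mul_top_l mul_perm_l permE_mx !mxE /liftS lift_perm_lift.
by rewrite eq_liftmax eq_sym.
Qed.

Lemma I3 d (W : {set 'I_d.+1}) (j : 'I_d.+1) : j \notin W ->
  topmx d *m (perm_mx (tperm j ord_max) *m (diagW W *m padmx R d)) =
  diagW [set i | lift ord_max i \in W].
Proof.
move=> hj; apply/matrixP => i k; rewrite mul_top_l mul_perm_l mul_diag_l padE !mxE inE.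
case: (eqVneq (lift ord_max i) j) => [e|ne].
  rewrite -e tpermL /= (gtn_eqF (ltn_ord k)) mulr0.
  by rewrite e (negbTE hj) andbF.
rewrite tpermD ?neq_lift // 1?eq_sym // liftmaxE.
have -> : ((k : nat) == i) = (k == i) by []. by rewrite eq_sym; case: (lift ord_max i \in W); case: (i == k); rewrite ?mul1r ?mul0r ?andbF.
Qed.

Lemma I4 n (W : {set 'I_n}) (s : 'S_n) :
  diagW W *m perm_mx s = perm_mx s *m diagW (s @: W).
Proof.
apply/matrixP => i k; rewrite mul_diag_l mul_perm_l permE_mx mxE mem_imset; last exact: perm_inj.
by case: (i \in W); case: (s i == k); rewrite ?mul1r ?mul0r.
Qed.

Lemma I5 d p (A : 'M[R]_(d.+1, p)) : (forall j, A ord_max j = 0) ->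
  padmx R d *m (topmx d *m A) = A.
Proof.
move=> hA; apply/matrixP => r k.
case: (unliftP ord_max r) => [i ->|->]; first by rewrite mul_pad_lift mul_top_l.
by rewrite mul_pad_max hA.
Qed.

Lemma I6 d : topmx d *m padmx R d = 1%:M.
Proof.
apply/matrixP => i k; rewrite mul_top_l padE lift_max !mxE.
by congr (_%:R); apply/eqP/eqP => [/val_inj|->].
Qed.

Lemma I7 n : diagW [set: 'I_n] = 1%:M.
Proof. by apply/matrixP => i k; rewrite !mxE inE andbT. Qed.

Lemma I8 n (s : 'S_n) : (perm_mx s)^T *m perm_mx s = 1%:M :> 'M[R]_n.
Proof. by rewrite tr_perm_mx -perm_mxM mulVg perm_mx1. Qed.

Lemma liftS_ex d (r : 'S_d.+1) : r ord_max = ord_max -> exists s, r = liftS s.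
Proof.
move=> hr.
have hne i : r (lift ord_max i) != ord_max.
  by rewrite -{2}hr (inj_eq perm_inj) eq_sym neq_lift.
pose f (i : 'I_d) : 'I_d := odflt i (unlift ord_max (r (lift ord_max i))).
have hf i : lift ord_max (f i) = r (lift ord_max i).
  rewrite /f; case: (unliftP ord_max (r (lift ord_max i))) => [k -> //|e].
  by move: (hne i); rewrite e eqxx.
have finj : injective f.
  by move=> i k e; apply: (@lift_inj _ ord_max); apply: (@perm_inj _ r); rewrite -!hf e.
exists (perm finj); apply/permP => x.
case: (unliftP ord_max x) => [i ->|->].
  by rewrite /liftS lift_perm_lift permE hf.
by rewrite /liftS lift_perm_id hr.
Qed.

End Mx.

Lemma cardC_ord n (W : {set 'I_n}) : #|~: W| = (n - #|W|)%N.
Proof. by rewrite cardsCs setCK card_ord. Qed.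


Section Gen.
Variables (R : realType) (c : nat -> nat) (b : nat).
Variable V : forall d, 'M[R]_(d, c d) -> Prop.
Variable L : forall d d', 'M[R]_(d', d) -> 'M[R]_(d, c d) -> 'M[R]_(d', c d').
Arguments L {d d'}.
Arguments V {d}.
Variable gs : forall d, 'I_(d * c d) -> {set 'I_d}.
Hypothesis HLcomp : forall d d' d'' (A : 'M[R]_(d', d)) (B : 'M[R]_(d'', d')) X,
  L B (L A X) = L (B *m A) X.
Hypothesis HL1 : forall d (X : 'M[R]_(d, c d)), L 1%:M X = X.
Hypothesis HV : forall d d' (A : 'M[R]_(d', d)) X, V X -> V (L A X).
Hypothesis Hlin : forall d d' (A : 'M[R]_(d', d)) a X Y,
  L A (a *: X + Y) = a *: L A X + L A Y.
Hypothesis Hgs : forall d (t : 'I_(d * c d)), (#|gs t| <= b)%N.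
Hypothesis Hmask : forall d (W : {set 'I_d}) X (t : 'I_(d * c d)),
  mxvec (L (diagW R W) X) 0 t = if gs t \subset W then mxvec X 0 t else 0.

Definition Ginv d (f : 'M[R]_(d, c d) -> R) m :=
  invpoly (@V d) (fun _ : 'S_d => True) (fun s => L (perm_mx s)) m f.

Lemma gen_part1 d m f : Ginv f m -> Ginv (fun X => f (L (padmx R d) X)) m.
Proof.
move=> [hp hi]; split.
  by apply: polyfun_comp hp => [a X Y|X VX]; [exact: Hlin|exact: HV].
move=> g X _ VX; rewrite HLcomp I1 -HLcomp.
exact: hi (liftS g) _ I (HV _ VX).
Qed.

Lemma gen_inj d m f : (b * m <= d)%N -> Ginv f m ->
  (forall X, V X -> f (L (padmx R d) X) = 0) -> forall Y, V Y -> f Y = 0.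
Proof.
move=> hd [[p [hp hfp]] hinv] h0 Y VY.
have zW (W : {set 'I_d.+1}) : W != setT -> f (L (diagW R W) Y) = 0.
  move=> hW.
  have [i hi] : exists i, i \notin W.
    case: (pickP [pred i | i \notin W]) => [i hi|h]; first by exists i.
    case/eqP: hW; apply/setP => x; have := h x; rewrite inE /=.
    by rewrite in_setT; case: (x \in W).
  rewrite -(hinv (tperm i ord_max) _ I (HV _ VY)) HLcomp.
  rewrite -(I5 (A := perm_mx (tperm i ord_max) *m diagW R W)).
    by rewrite -HLcomp h0 //; apply: HV.
  by move=> j; rewrite mul_perm_l tpermR mxE (negbTE hi) andbF.
have := alt_mask_sum (gs := @gs d.+1) (mxvec Y 0) (@Hgs d.+1) hp (leq_ltn_trans hd (ltnSn d)).
have e (W : {set 'I_d.+1}) : p.@[fun t => if gs t \subset W then mxvec Y 0 t else 0] =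
           f (L (diagW R W) Y).
  by rewrite (hfp _ (HV _ VY)); apply: (@meval_eq _ R) => t; rewrite Hmask.
under eq_bigr => W _ do rewrite e.
move=> hs; have: (-1) ^+ #|[set: 'I_d.+1]| * f Y = 0.
  rewrite -hs (bigD1 setT) //= [X in _ = _ + X]big1 ?addr0; first by rewrite I7 HL1.
  by move=> W hW; rewrite zW ?mulr0.
by move/eqP; rewrite mulf_eq0 signr_eq0 => /eqP.
Qed.

Definition aw d (W : {set 'I_d.+1}) : R :=
  if (#|W| < d.+1)%N then (-1) ^+ (d - #|W|) else 0.

Lemma gen_surj d m h : Ginv h m ->
  exists f, Ginv f m /\ forall X, V X -> f (L (padmx R d) X) = h X.
Proof.
move=> [hp hinv].
pose F (W : {set 'I_d.+1}) (j : 'I_d.+1) (Y : 'M[R]_(d.+1, c d.+1)) :=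
  h (L (topmx R d *m (perm_mx (tperm j ord_max) *m diagW R W)) Y).
pose w (W : {set 'I_d.+1}) := aw W / (d.+1 - #|W|)%:R.
pose f Y := \sum_(W : {set 'I_d.+1}) \sum_(j in ~: W) w W * F W j Y.
exists f; split; first split.
- apply: polyfun_sum => W; apply: polyfun_sum => j.
  apply: polyfun_ext (polyfun_lin (w W) _ (polyfun0 _ _)) => [Y _|]; first by rewrite addr0.
  by apply: polyfun_comp hp => [a X Y|X VX]; [exact: Hlin|exact: HV].
- move=> pi Y _ VY.
  have key W j : F W j (L (perm_mx pi) Y) = F (pi @: W) (pi j) Y.
    rewrite /F HLcomp.
    have [tau htau] : exists tau, (tperm j ord_max * pi * tperm (pi j) ord_max)%g = liftS tau.
      by apply: liftS_ex; rewrite !permM tpermR tpermL.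
    have e1 : (tperm j ord_max * pi = liftS tau * tperm (pi j) ord_max)%g.
      by rewrite -htau -mulgA tperm2 mulg1.
    have -> : topmx R d *m (perm_mx (tperm j ord_max) *m diagW R W) *m perm_mx pi =
        perm_mx tau *m (topmx R d *m (perm_mx (tperm (pi j) ord_max) *m diagW R (pi @: W))).
      rewrite -!mulmxA I4 !mulmxA -(mulmxA (topmx R d)) -perm_mxM e1 perm_mxM.
      by rewrite (mulmxA (topmx R d)) I2.
    by rewrite -HLcomp hinv //; apply: HV.
  rewrite /f; symmetry.
  rewrite (reindex_inj (imset_inj (@perm_inj _ pi))) /=; apply: eq_bigr => W _.
  rewrite (reindex_inj (@perm_inj _ pi)) /=; apply: eq_big => [j|j _].
    by rewrite !in_setC mem_imset //; exact: perm_inj.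
  by rewrite key /w /aw card_imset //; exact: perm_inj.
- move=> X VX; rewrite /f.
  pose g (W : {set 'I_d.+1}) := h (L (diagW R [set i | lift ord_max i \in W]) X).
  have t1 W : \sum_(j in ~: W) w W * F W j (L (padmx R d) X) = aw W * g W.
    rewrite (eq_bigr (fun _ => w W * g W)) => [|j hj]; last first.
      rewrite /F HLcomp -!mulmxA I3 //; by rewrite in_setC in hj.
    rewrite sumr_const.
    have hc : #|~: W| = (d.+1 - #|W|)%N by rewrite cardC_ord.
    rewrite hc /w /aw; case: ltnP => hW; last by rewrite !mul0r mul0rn.
    rewrite -[X in X = _]mulr_natr mulrAC divfK //; rewrite pnatr_eq0 subn_eq0 -ltnNge //.
  under eq_bigr => W _ do rewrite t1.
  rewrite (sum_inv _ (tog_inv ord_max) (P := fun W : {set 'I_d.+1} => ord_max \in W)); last first.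
    by move=> W; rewrite tog_in.
  pose W0 : {set 'I_d.+1} := [set~ ord_max].
  have cW0 : #|W0| = d by rewrite cardsC1 card_ord.
  have sub0 (W : {set 'I_d.+1}) : ord_max \notin W -> W \subset W0.
    move=> hW; apply/subsetP => x hx; rewrite !inE; apply: contraNneq hW => <- //.
  rewrite (bigD1 W0) /=; last by rewrite !inE eqxx.
  rewrite big1 ?addr0 => [|W /andP [hW ne]].
    rewrite /tog !inE eqxx /= /aw cW0 ltnSn subnn expr0.
    have -> : ord_max |: W0 = setT.
      by apply/setP => x; rewrite !inE; case: (x == ord_max).
    rewrite cardsT card_ord ltnn mul0r addr0 mul1r /g.
    have -> : [set i | lift ord_max i \in W0] = setT.
      by apply/setP => i; rewrite !inE eq_sym neq_lift.
    by rewrite I7 HL1.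
  rewrite /tog (negbTE hW).
  have -> : g (ord_max |: W) = g W.
    rewrite /g; congr (h (L (diagW R _) X)); apply/setP => i.
    by rewrite !inE eq_sym (negbTE (neq_lift _ _)).
  rewrite -mulrDl; apply/eqP; rewrite mulf_eq0; apply/orP; left.
  have hle : (#|W| < d)%N.
    have := subset_leq_card (sub0 W hW); rewrite cW0 => hle'.
    rewrite ltn_neqAle hle' andbT.
    apply: contra ne => /eqP e; by rewrite eqEcard sub0 //= cW0 e.
  rewrite /aw cardsU1 hW /= (ltn_trans hle (ltnSn d)) add1n ltnS hle -(subnSK hle) exprS mulN1r.
  by rewrite addNr.
Qed.

Lemma gen_restr d m : (b * m <= d)%N ->
  restr_iso (@V d) (fun _ : 'S_d => True) (fun s => L (perm_mx s))
            (@V d.+1) (fun _ : 'S_d.+1 => True) (fun s => L (perm_mx s))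
            (L (padmx R d)) m.
Proof.
move=> hd; split.
- move=> f hf; exact: gen_part1 hf.
- move=> f1 f2 [h1 i1] [h2 i2] heq Y VY; apply/eqP; rewrite -subr_eq0; apply/eqP.
  apply: (@gen_inj d m (fun Y => f1 Y - f2 Y)) hd _ _ Y VY.
    split.
      by apply: polyfun_ext (polyfun_lin (-1) h2 h1) => X _; rewrite mulN1r addrC.
    by move=> g X _ VX; rewrite i1 ?i2.
  by move=> X VX; rewrite heq ?subrr.
- move=> h hh; exact: gen_surj hh.
Qed.

End Gen.


Section Inst.
Variable R : realType.

Lemma frobE r c (X Y : 'M[R]_(r, c)) : frob X Y = \tr (X *m Y^T).
Proof.
rewrite /frob /mxtrace; apply: eq_bigr => i _; rewrite mxE.
by apply: eq_bigr => j _; rewrite mxE.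
Qed.

Lemma frob_lr r r' c c' (A : 'M[R]_(r', r)) (Q : 'M[R]_(c, c')) (X Y : 'M[R]_(r, c)) :
  A^T *m A = 1%:M -> Q *m Q^T = 1%:M -> frob (A *m X *m Q) (A *m Y *m Q) = frob X Y.
Proof.
move=> hA hQ; rewrite !frobE !trmx_mul.
rewrite -!mulmxA (mulmxA Q) hQ mul1mx.
rewrite mxtrace_mulC -!mulmxA hA mulmx1.
by rewrite mxtrace_mulC.
Qed.

Definition ij r c (t : 'I_(r * c)) : 'I_r * 'I_c := enum_val (cast_ord (esym (mxvec_cast r c)) t).

Lemma ijE r c (i : 'I_r) (j : 'I_c) : ij (mxvec_index i j) = (i, j).
Proof. by rewrite /ij /mxvec_index cast_ordK enum_rankK. Qed.

End Inst.

Section RowInst.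
Variables (R : realType) (k : nat).

Definition Lrow d d' (A : 'M[R]_(d', d)) (X : 'M[R]_(d, k)) : 'M[R]_(d', k) := A *m X.
Definition gsrow d (t : 'I_(d * k)) : {set 'I_d} := [set (ij t).1].

Lemma row_stab : stab_deg_le (@allV R (fun d => d) (fun _ => k)) (@allG (fun d => 'S_d))
   (@rowperm_act R k) (@rowpad R k) (fun m => m).
Proof.
move=> m d hd.
apply: (gen_restr (R:=R) (c:=fun _ => k) (b:=1) (V:=@allV R (fun d => d) (fun _ => k)) (L:=Lrow) (gs:=gsrow)).
- by move=> d1 d2 d3 A B X; rewrite /Lrow mulmxA.
- by move=> d1 X; rewrite /Lrow mul1mx.
- by [].
- by move=> d1 d2 A a X Y; rewrite /Lrow mulmxDr scalemxAr.
- by move=> d1 t; rewrite /gsrow cards1.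
- move=> d1 W X t; case: (mxvec_indexP t) => i j.
  by rewrite /gsrow ijE /Lrow !mxvecE mul_diag_l sub1set; case: (i \in W); rewrite ?mul1r ?mul0r.
- by rewrite mul1n.
Qed.

End RowInst.

Section SymInst.
Variable R : realType.

Definition Lsym d d' (A : 'M[R]_(d', d)) (X : 'M[R]_(d, d)) : 'M[R]_(d', d') := A *m X *m A^T.
Definition gssym d (t : 'I_(d * d)) : {set 'I_d} := [set (ij t).1; (ij t).2].

Lemma mul_diag_r p n (A : 'M[R]_(p, n)) (W : {set 'I_n}) i j :
  (A *m (diagW R W)^T) i j = A i j * (j \in W)%:R.
Proof.
rewrite -[A]trmxK -trmx_mul mxE mul_diag_l mxE mulrC.
by rewrite trmxK.
Qed.

Lemma sym_stab : stab_deg_le (@symV R) (@allG (fun d => 'S_d))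
   (@conj_act R) (@sympad R) (fun m => 2 * m)%N.
Proof.
move=> m d hd.
apply: (gen_restr (R:=R) (c:=fun d => d) (b:=2) (V:=@symV R) (L:=Lsym) (gs:=gssym)).
- by move=> d1 d2 d3 A B X; rewrite /Lsym trmx_mul !mulmxA.
- by move=> d1 X; rewrite /Lsym trmx1 mul1mx mulmx1.
- move=> d1 d2 A X; rewrite /symV /Lsym => hX.
  by rewrite !trmx_mul trmxK hX mulmxA.
- by move=> d1 d2 A a X Y; rewrite /Lsym mulmxDr mulmxDl scalemxAl scalemxAr.
- by move=> d1 t; rewrite /gssym cards2; case: (_ != _).
- move=> d1 W X t; case: (mxvec_indexP t) => i j.
  rewrite /gssym ijE /Lsym !mxvecE mul_diag_r mul_diag_l subUset !sub1set /=.
  by case: (i \in W); case: (j \in W); rewrite ?mul1r ?mul0r ?mulr1 ?mulr0.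
- by [].
Qed.

End SymInst.


Section Cons.
Variable R : realType.

Lemma padTpad d : (padmx R d)^T *m padmx R d = 1%:M.
Proof. exact: I6. Qed.

Lemma row_cons k : @consistent_seq R (fun d => d) (fun _ => k)
   (@allV R (fun d => d) (fun _ => k))
   (fun d => 'S_d) (@allG (fun d => 'S_d)) (@rowperm_act R k) liftS (@rowpad R k).
Proof.
move=> d; split.
- split=> // a X Y; by rewrite /rowpad mulmxDr scalemxAr.
- move=> X Y _ _; rewrite /rowpad -[padmx R d *m X]mulmx1 -[padmx R d *m Y]mulmx1.
  by rewrite frob_lr ?padTpad // trmx1 mulmx1.
- move=> g _; split=> //.
    by move=> a X Y; rewrite /rowperm_act mulmxDr scalemxAr.
  move=> X Y _ _; rewrite /rowperm_act -[perm_mx g *m X]mulmx1 -[perm_mx g *m Y]mulmx1.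
  by rewrite frob_lr ?I8 // trmx1 mulmx1.
- by [].
- by move=> g X _ _; rewrite /rowpad /rowperm_act mulmxA I1 mulmxA.
Qed.

Lemma sym_cons : @consistent_seq R (fun d => d) (fun d => d) (@symV R)
   (fun d => 'S_d) (@allG (fun d => 'S_d)) (@conj_act R) liftS (@sympad R).
Proof.
move=> d; split.
- split.
    by move=> X; rewrite /symV /sympad => hX; rewrite !trmx_mul trmxK hX mulmxA.
  by move=> a X Y; rewrite /sympad mulmxDr mulmxDl scalemxAl scalemxAr.
- move=> X Y _ _; rewrite /sympad frob_lr ?padTpad // trmxK; exact: padTpad.
- move=> g _; split.
  + by move=> X; rewrite /symV /conj_act => hX; rewrite !trmx_mul trmxK hX mulmxA.
  + by move=> a X Y; rewrite /conj_act mulmxDr mulmxDl scalemxAl scalemxAr.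
  + move=> X Y _ _; rewrite /conj_act frob_lr ?I8 // trmxK; exact: I8.
- by [].
- move=> g X _ _; rewrite /sympad /conj_act.
  have e : (perm_mx g)^T *m (padmx R d)^T = (padmx R d)^T *m (perm_mx (liftS g))^T.
    by rewrite -!trmx_mul I1.
  by rewrite !mulmxA I1 -!mulmxA e.
Qed.

Lemma SO_cons k : @consistent_seq R (fun d => d) (fun _ => k)
   (@allV R (fun d => d) (fun _ => k))
   (@SO_t R k) (@SO_G R k) (@SO_act R k) (@SO_emb R k) (@rowpad R k).
Proof.
move=> d; split.
- split=> // a X Y; by rewrite /rowpad mulmxDr scalemxAr.
- move=> X Y _ _; rewrite /rowpad -[padmx R d *m X]mulmx1 -[padmx R d *m Y]mulmx1.
  by rewrite frob_lr ?padTpad // trmx1 mulmx1.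
- move=> [s Q] /= hQ; split=> //.
    by move=> a X Y; rewrite /SO_act /= mulmxDr mulmxDl scalemxAl scalemxAr.
  move=> X Y _ _; rewrite /SO_act /= frob_lr ?I8 //; exact: mulmx1C.
- by [].
- by move=> [s Q] X _ _; rewrite /rowpad /SO_act /= !mulmxA I1.
Qed.

End Cons.

Lemma cons_part1 (R : realType) (r c : nat -> nat)
    (V : forall d, 'M[R]_(r d, c d) -> Prop)
    (Gt : nat -> Type) (G : forall d, Gt d -> Prop)
    (act : forall d, Gt d -> 'M[R]_(r d, c d) -> 'M[R]_(r d, c d))
    (emb : forall d, Gt d -> Gt d.+1)
    (gam : forall d, 'M[R]_(r d, c d) -> 'M[R]_(r d.+1, c d.+1)) d m f :
  consistent_seq V G act emb gam ->
  invpoly (V d.+1) (G d.+1) (act d.+1) m f ->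
  invpoly (V d) (G d) (act d) m (fun X => f (gam d X)).
Proof.
move=> Hcs [hp hi]; move: (Hcs d); case=> [[Vg Lg] _ _ Ge Heq]; split.
  exact: polyfun_comp Lg Vg hp.
by move=> g X hg VX; rewrite (Heq _ _ hg VX); apply: hi; [exact: Ge | exact: Vg].
Qed.

Section SOstab.
Variables (R : realType) (k : nat).

Local Notation Vk := (@allV R (fun d => d) (fun _ => k)).
Local Notation Vkd d := (@allV R (fun d => d) (fun _ => k) d).

Lemma SO_to_row d m f : invpoly (Vkd d) (@SO_G R k d) (@SO_act R k d) m f ->
  invpoly (Vkd d) (@allG (fun d => 'S_d) d) (@rowperm_act R k d) m f.
Proof.
move=> [hp hi]; split=> // g X _ VX.
have := hi (g, 1%:M) X; rewrite /SO_act /SO_G /= mulmx1 trmx1 mulmx1; exact.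
Qed.

Lemma SO_stab : stab_deg_le Vk (@SO_G R k) (@SO_act R k) (@rowpad R k) (fun m => 2 * m)%N.
Proof.
move=> m d hd.
have hd' : (m <= d)%N by apply: leq_trans hd; rewrite leq_pmull.
have [_ inj surj] := row_stab R k hd'.
split.
- move=> f hf; exact: cons_part1 (SO_cons R k) hf.
- move=> f1 f2 h1 h2 heq; exact: inj (SO_to_row h1) (SO_to_row h2) heq.
- move=> h hh; have [f [[fp fi] fe]] := surj h (SO_to_row hh).
  exists f; split=> //; split=> // [[s Q]] Y /= hQ _.
  have fQ : forall Z, f (Z *m Q) = f Z.
    move=> Z; apply: (inj (fun Z => f (Z *m Q)) f) => //.
    + split.
        apply: polyfun_comp fp => // a X1 X2.
        by rewrite mulmxDl scalemxAl.
      by move=> g X _ _; rewrite /rowperm_act -mulmxA fi.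
    + move=> X _; rewrite /rowpad -mulmxA.
      rewrite (fe (X *m Q)) // fe //.
      have := (proj2 hh) (1%g, Q) X hQ I; rewrite /SO_act /= perm_mx1 mul1mx; exact.
  rewrite /SO_act /= fQ; exact: fi.
Qed.

End SOstab.

Theorem theorem5p1 (R : realType) :
  (* (i) V_d = R^d (as d x 1 columns), G_d = S_d permuting coordinates, D = m *)
  (@consistent_seq R (fun d => d) (fun _ => 1%N) (@allV R (fun d => d) (fun _ => 1%N))
      (fun d => 'S_d) (@allG (fun d => 'S_d)) (@rowperm_act R 1%N) liftS (@rowpad R 1%N)
   /\ @stab_deg_le R (fun d => d) (fun _ => 1%N) (@allV R (fun d => d) (fun _ => 1%N))
      (fun d => 'S_d) (@allG (fun d => 'S_d)) (@rowperm_act R 1%N) (@rowpad R 1%N)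
      (fun m => m))
  /\
  (* (ii) V_d = R^{d x k}, G_d = S_d permuting rows, D = m *)
  (forall k : nat,
    @consistent_seq R (fun d => d) (fun _ => k) (@allV R (fun d => d) (fun _ => k))
      (fun d => 'S_d) (@allG (fun d => 'S_d)) (@rowperm_act R k) liftS (@rowpad R k)
   /\ @stab_deg_le R (fun d => d) (fun _ => k) (@allV R (fun d => d) (fun _ => k))
      (fun d => 'S_d) (@allG (fun d => 'S_d)) (@rowperm_act R k) (@rowpad R k)
      (fun m => m))
  /\
  (* (iii) symmetric d x d matrices, G_d = S_d acting by X |-> P X P^T, D = 2m *)
  (@consistent_seq R (fun d => d) (fun d => d) (@symV R)
      (fun d => 'S_d) (@allG (fun d => 'S_d)) (@conj_act R) liftS (@sympad R)
   /\ @stab_deg_le R (fun d => d) (fun d => d) (@symV R)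
      (fun d => 'S_d) (@allG (fun d => 'S_d)) (@conj_act R) (@sympad R)
      (fun m => 2 * m)%N)
  /\
  (* (iv) V_d = R^{d x k}, G_d = S_d x O(k) acting by X |-> P X Q, D = 2m *)
  (forall k : nat,
    @consistent_seq R (fun d => d) (fun _ => k) (@allV R (fun d => d) (fun _ => k))
      (@SO_t R k) (@SO_G R k) (@SO_act R k) (@SO_emb R k) (@rowpad R k)
   /\ @stab_deg_le R (fun d => d) (fun _ => k) (@allV R (fun d => d) (fun _ => k))
      (@SO_t R k) (@SO_G R k) (@SO_act R k) (@rowpad R k)
      (fun m => 2 * m)%N).
Proof.
split; first by split; [exact: (row_cons R 1) | exact: (row_stab R 1)].
split; first by move=> k; split; [exact: row_cons | exact: row_stab].
split; first by split; [exact: sym_cons | exact: sym_stab].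
by move=> k; split; [exact: SO_cons | exact: SO_stab].
Qed.
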